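(* Let $m\ge3$, let $\lambda$ be a $\mathbb{Z}_2$-characteristic map over $P_m$, and let $(p,S)$ and $(q,T)$ be e-sets compatible with $\lambda$ with $S\ne\varnothing$, $T\ne\varnothing$ and $\lambda(p)\ne\lambda(q)$. Then the edges $\{\lambda,\operatorname{inv}_S\lambda,p\}$ and $\{\lambda,\operatorname{inv}_T\lambda,q\}$ span a realizable square (i.e. there is a $\mathbb{Z}_2$-characteristic map $\Lambda$ over $\mathrm{wed}_{p,q}P_m$ with $\operatorname{proj}_{\{p_2,q_2\}}\Lambda\simeq\lambda$, $\operatorname{proj}_{\{p_1,q_2\}}\Lambda\simeq\operatorname{inv}_S\lambda$, $\operatorname{proj}_{\{p_2,q_1\}}\Lambda\simeq\operatorname{inv}_T\lambda$) if and only if $\Omega_q(S)\cap\Omega_p(T)=\varnothing$.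
   Context: $P_m$: simplicial complex on $[m]$ with facets $\{i,i+1\}$ mod $m$. A $\mathbb{Z}_2$-characteristic map over $P_m$ is a map $\lambda\colon[m]\to\{\mathbf a,\mathbf b,\mathbf c\}=\mathbb{Z}_2^2\setminus\{0\}$ with $\lambda(i)\ne\lambda(i+1)$ mod $m$; $\simeq$ denotes D-J equivalence (composition with $GL(n,\mathbb{Z}_2)$). $\operatorname{supp}_\lambda p=\lambda^{-1}(\lambda(p))$. An e-set compatible with $\lambda$ is a pair $(p,S)$ with $p\in[m]$, $S\subseteq\operatorname{supp}_\lambda p$, $|S|$ even. For nonempty such $S$ (necessarily a non-consecutive set, $|S|\ge2$), the points of $S$ cut the cycle $[m]$ into $|S|$ nonempty arcs (maximal cyclic intervals of $[m]\setminus S$), which are colored alternately black and white. $\operatorname{inv}_S\lambda$ is obtained from $\lambda$ by exchanging, on every vertex of the black arcs, the two values different from $\lambda(p)$; it is well defined up to D-J equivalence (independent of the coloring); $\operatorname{inv}_\varnothing\lambda=\lambda$. For $r\in[m]\setminus S$, $\Omega_r(S)=A\cup S$ where $A$ is the union of the black arcs for the coloring in which the arc containing $r$ is white. Wedges: $\mathrm{wed}_{p,q}P_m$ has vertices $p_1,p_2,q_1,q_2$ replacing $p,q$, minimal non-faces obtained from those of $P_m$ by replacing $p$ by $p_1,p_2$ and $q$ by $q_1,q_2$ when they occur. Characteristic maps over it take values in $\mathbb{Z}_2^{m}$ (dimension $m$ complex $-1$... i.e. $\mathbb{Z}_2^4$) with faces mapped to linearly independent sets; $\operatorname{proj}_\sigma\Lambda(w)=[\Lambda(w)]$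 modulo $\langle\Lambda(v):v\in\sigma\rangle$ on the link of $\sigma$, and the link of $\{p_i,q_j\}$ is identified with $P_m$ via $p_{3-i}\mapsto p$, $q_{3-j}\mapsto q$. *)

(* Defs.v *)
From HB Require Import structures.
From mathcomp Require Import all_boot all_order all_algebra.
Set Implicit Arguments. Unset Strict Implicit. Unset Printing Implicit Defensive.
Import GRing.Theory.
Local Open Scope ring_scope.

(* Vertex set of P_m is 'I_m; i and ordS i (= i+1 mod m) are adjacent.
   Z_2^2 is 'rV['F_2]_2, Z_2^4 is 'rV['F_2]_4. *)

Definition is_char_Pm (m : nat) (lam : 'I_m -> 'rV['F_2]_2) : Prop :=
  forall i : 'I_m, lam i != 0 /\ lam i != lam (ordS i).

Definition supp (m : nat) (lam : 'I_m -> 'rV['F_2]_2) (p : 'I_m) : {set 'I_m} :=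
  [set x | lam x == lam p].

Definition eset (m : nat) (lam : 'I_m -> 'rV['F_2]_2) (p : 'I_m) (S : {set 'I_m}) : Prop :=
  S \subset supp lam p /\ ~~ odd #|S|.

(** Colouring of the arcs of [m] \ S (|S| even): a vertex v is black iff an odd
    number of points of S precede it in 0..m-1.  Consecutive arcs get opposite
    colours, and the arc wrapping around m-1 -> 0 is consistently coloured
    because |S| is even. *)
Definition black (m : nat) (S : {set 'I_m}) (v : 'I_m) : bool :=
  odd #|[set s in S | (s < v)%N]|.

(** inv_S lam (for the e-set (p,S)): on black vertices exchange the two values
    different from lam p (the value x <> lam p, x <> 0, is exchanged with
    x + lam p). *)
Definition invS (m : nat) (lam : 'I_m -> 'rV['F_2]_2) (p : 'I_m) (S : {set 'I_m})
  (v : 'I_m) : 'rV['F_2]_2 :=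
  if (v \notin S) && black S v && (lam v != lam p) then lam v + lam p else lam v.

(** Omega_r(S) = S together with the black arcs for the colouring in which the
    arc containing r is white. *)
Definition Omega (m : nat) (r : 'I_m) (S : {set 'I_m}) : {set 'I_m} :=
  [set x | (x \in S) || (black S x != black S r)].

Definition Pm_face (m : nat) (N : {set 'I_m}) : bool :=
  (#|N| <= 1)%N || [exists i : 'I_m, N == [set i; ordS i]].

Definition Pm_min_nonface (m : nat) (N : {set 'I_m}) : bool :=
  ~~ Pm_face N && [forall N' : {set 'I_m}, (N' \proper N) ==> Pm_face N'].

(** The wedge wed_{p,q} P_m: vertices are encoded in 'I_m * bool:
    (v,false) is the vertex v (v <> p,q); p_1 = (p,false), p_2 = (p,true),
    q_1 = (q,false), q_2 = (q,true).  Other pairs are not vertices. *)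
Definition wed_vert (m : nat) (p q : 'I_m) : {set 'I_m * bool} :=
  [set x | (x.2 == false) || (x.1 == p) || (x.1 == q)].

Definition wed_repl (m : nat) (p q : 'I_m) (N : {set 'I_m}) : {set 'I_m * bool} :=
  [set x in wed_vert p q | x.1 \in N].

Definition wed_face (m : nat) (p q : 'I_m) (sigma : {set 'I_m * bool}) : bool :=
  (sigma \subset wed_vert p q) &&
  [forall N : {set 'I_m}, Pm_min_nonface N ==> ~~ (wed_repl p q N \subset sigma)].

Definition is_char_wed (m : nat) (p q : 'I_m) (Lam : 'I_m * bool -> 'rV['F_2]_4) : Prop :=
  forall sigma : {set 'I_m * bool}, wed_face p q sigma ->
    row_free (\matrix_(k < #|sigma|) Lam (enum_val k)).

(** Identification of the link of {p_i, q_j} with P_m: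
    p_{3-i} |-> p, q_{3-j} |-> q (here i,j : bool, false = 1, true = 2). *)
Definition link_id (m : nat) (p q : 'I_m) (i j : bool) (v : 'I_m) : 'I_m * bool :=
  if v == p then (p, ~~ i) else if v == q then (q, ~~ j) else (v, false).

(** proj_{p_i,q_j} Lam is D-J equivalent to mu: there is a linear map
    M : Z_2^4 -> Z_2^2 whose kernel is exactly <Lam p_i, Lam q_j> (i.e. M
    induces, up to GL(2,Z_2), the quotient map) with
    mu v = M (Lam (link_id v)) for every vertex v of P_m. *)
Definition proj_equiv (m : nat) (p q : 'I_m) (Lam : 'I_m * bool -> 'rV['F_2]_4)
  (i j : bool) (mu : 'I_m -> 'rV['F_2]_2) : Prop :=
  exists M : 'M['F_2]_(4, 2),
    [/\ Lam (p, i) *m M = 0, Lam (q, j) *m M = 0,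
        (forall x : 'rV['F_2]_4, x *m M = 0 ->
           exists a b : 'F_2, x = a *: Lam (p, i) + b *: Lam (q, j))
      & forall v : 'I_m, mu v = Lam (link_id p q i j v) *m M].

(* Main.v *)
Require Import Defs.
From HB Require Import structures.
From mathcomp Require Import all_boot all_order all_algebra.
From mathcomp Require Import zify.
Set Implicit Arguments. Unset Strict Implicit. Unset Printing Implicit Defensive.
Import GRing.Theory.
Local Open Scope ring_scope.

Lemma F2_cases (a : 'F_2) : a = 0 \/ a = 1.
Proof.
case: a => [[|[|k]] Hk]; [left|right|by []]; exact: val_inj.
Qed.

Lemma F2_addxx (x : 'F_2) : x + x = 0.
Proof. by case: (F2_cases x) => ->; apply: val_inj. Qed.

Lemma addxx2 n k (x : 'M['F_2]_(n,k)) : x + x = 0.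
Proof. apply/matrixP => i j; rewrite !mxE. exact: F2_addxx. Qed.

Lemma subr_F2 n k (x y : 'M['F_2]_(n,k)) : x - y = x + y.
Proof. by rewrite -[- y]add0r -(addxx2 y) addrK. Qed.

Lemma oppr_F2 n k (x : 'M['F_2]_(n,k)) : - x = x.
Proof. by rewrite -[- x]add0r subr_F2 add0r. Qed.

Lemma card_rV2 : #|{: 'rV['F_2]_2}| = 4%N.
Proof. by rewrite card_mx card_Fp. Qed.

Lemma third_col (a b c : 'rV['F_2]_2) : a != 0 -> b != 0 -> c != 0 -> a != b ->
  c != a -> c != b -> c = a + b.
Proof.
move=> a0 b0 c0 ab ca cb; apply/eqP; apply: contraT => cab.
have ab0 : a + b != 0 by apply: contra ab; rewrite addr_eq0 oppr_F2.
have aab : a + b != a by rewrite -subr_eq0 addrAC subrr add0r.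
have aab' : a + b != b by rewrite -subr_eq0 addrK.
have U : uniq [:: (0%R : 'rV['F_2]_2); a; b; (a + b)%R; c].
  rewrite /= !inE !negb_or !(eq_sym 0) a0 b0 ab0 c0 ab. idtac.
  by rewrite !(eq_sym _ c) ca cb cab !(eq_sym _ (a+b)) aab aab'.
have := max_card (mem [:: (0%R : 'rV['F_2]_2); a; b; (a + b)%R; c]).
by rewrite (card_uniqP U) card_rV2.
Qed.

Lemma val_ordS m (v : 'I_m) : val (ordS v) = if (v.+1 < m)%N then v.+1 else 0%N.
Proof.
rewrite /=; case: ifP => h; first by rewrite modn_small.
have -> : v.+1 = m by have := ltn_ord v; lia.
by rewrite modnn.
Qed.

Lemma black_ordS m (S : {set 'I_m}) (v : 'I_m) : ~~ odd #|S| ->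
  black S (ordS v) = (v \in S) (+) black S v.
Proof.
move=> ev; rewrite /black val_ordS; case: ifP => h.
  rewrite (cardsD1 v) !inE ltnS leqnn andbT.
  have -> : [set s in S | (s < v.+1)%N] :\ v = [set s in S | (s < v)%N].
    apply/setP => s; rewrite !inE ltnS leq_eqVlt -val_eqE /=.
    by case: (s =P v :> nat) => [->|_]; rewrite ?eqxx ?ltnn ?andbF.
  by rewrite oddD oddb.
have -> : [set s in S | (s < 0)%N] = set0 by apply/setP => s; rewrite !inE ltn0 andbF.
have -> : [set s in S | (s < v)%N] = S :\ v.
  apply/setP => s; rewrite !inE andbC; congr andb.
  have := ltn_ord s; have := ltn_ord v; rewrite -val_eqE /=; lia.
rewrite cards0 /=; case vS: (v \in S).
  have := cardsD1 v S; rewrite vS => E.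
  by move: ev; rewrite E /= add0n negbK => ->.
have := cardsD1 v S; rewrite vS add0n => <-.
by rewrite (negbTE ev).
Qed.

Section Faces.
Variable m : nat.
Implicit Types N : {set 'I_m}.

Lemma face_sub N N' : N \subset N' -> Pm_face N' -> Pm_face N.
Proof.
move=> sub /orP[c|/existsP[i /eqP E]]; apply/orP.
  by left; apply: leq_trans (subset_leq_card sub) c.
have : (#|N| <= 2)%N.
  by apply: leq_trans (subset_leq_card sub) _; rewrite E cards2; case: (_ != _).
rewrite leq_eqVlt ltnS => /orP[/eqP c2|]; last by left.
right; apply/existsP; exists i; rewrite -E eqEcard sub /=.
by rewrite c2 E cards2; case: (_ != _).
Qed.

Lemma face_edge (x0 : 'I_m) N : Pm_face N -> exists i, N \subset [set i; ordS i].
Proof.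
case/orP=> [c|/existsP[i /eqP ->]]; last by exists i.
case: (set_0Vmem N) => [->|[x xN]]; first by exists x0; apply: sub0set.
exists x; apply/subsetP => y yN; rewrite !inE.
have : (#|[set x; y]| <= 1)%N by apply: leq_trans c; apply/subset_leq_card/subsetP => z; rewrite !inE => /orP[]/eqP->.
by rewrite cards2; case: eqP => // ->; rewrite eqxx.
Qed.

Lemma nonface_min N : ~~ Pm_face N -> exists N', N' \subset N /\ Pm_min_nonface N'.
Proof.
move: {2}#|N| (leqnn #|N|) => n; elim: n N => [|n IH] N.
  by rewrite leqn0 => /eqP c; rewrite /Pm_face c.
move=> c nf; case: (boolP [forall N' : {set 'I_m}, (N' \proper N) ==> Pm_face N']) => H.
  by exists N; split => //; rewrite /Pm_min_nonface nf H.
move/forallPn: H => [N' ]; rewrite negb_imply => /andP[pr nf'].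
have [N'' [s mn]] := IH N' (leq_trans (proper_card pr) c) nf'.
by exists N''; split => //; apply: subset_trans s (proper_sub pr).
Qed.

Lemma nonadj_minnf (u v : 'I_m) : (2 < m)%N -> u != v -> ordS u != v -> ordS v != u ->
  Pm_min_nonface [set u; v].
Proof.
move=> m2 uv h1 h2; apply/andP; split.
  rewrite /Pm_face cards2 uv /= negb_exists; apply/forallP => i.
  apply/negP => /eqP E.
  have iE : i \in [set u; v] by rewrite E !inE eqxx.
  have sE : ordS i \in [set u; v] by rewrite E !inE eqxx orbT.
  have ne : ordS i != i.
    rewrite -val_eqE val_ordS; case: ifP => h; apply/eqP => /= h'; have := ltn_ord i; lia.
  move: iE sE; rewrite !inE => /orP[]/eqP ei /orP[]/eqP h; subst i.
  all: try rewrite h in ne; try rewrite h in h1; try rewrite h in h2.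
  all: try by rewrite eqxx in ne.
  all: try by rewrite eqxx in h1.
  all: try by rewrite eqxx in h2.
apply/forallP => N'; apply/implyP => pr; apply/orP; left.
by have := proper_card pr; rewrite cards2 uv ltnS.
Qed.
End Faces.

Section Wed.
Variables (m : nat) (p q : 'I_m).

Definition base (X : {set 'I_m * bool}) : {set 'I_m} :=
  [set v | ((v, false) \in X) && (((v != p) && (v != q)) || ((v, true) \in X))].

Lemma wed_faceP X : wed_face p q X = (X \subset wed_vert p q) && Pm_face (base X).
Proof.
rewrite /wed_face; case: (boolP (X \subset wed_vert p q)) => //= sub.
apply/idP/idP.
  move=> H; apply: contraT => nf.
  have [N [sN mn]] := nonface_min nf.
  have := (forallP H) N; rewrite mn /= => /negP H2; exfalso; apply: H2.
  apply/subsetP => -[v b]; rewrite /wed_repl !inE /= => /andP[vw vN].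
  have := subsetP sN v vN; rewrite !inE => /andP[h1 h2].
  case: b vw => //= vw.
  by case/orP: h2 => // /andP[/negbTE vp /negbTE vq]; move: vw; rewrite vp vq.
move=> F; apply/forallP => N; apply/implyP => /andP[nf _]; apply: contra nf => sN.
apply: face_sub F; apply/subsetP => v vN.
have i1 : (v, false) \in X by apply: (subsetP sN); rewrite !inE /= vN.
rewrite !inE i1 /=; case: (boolP ((v != p) && (v != q))) => //= h.
apply: (subsetP sN); rewrite !inE /= vN andbT.
by move: h; rewrite negb_and !negbK => /orP[]->; rewrite ?orbT.
Qed.

Lemma wed_face_sub (X Y : {set 'I_m * bool}) : Y \subset X -> wed_face p q X -> wed_face p q Y.
Proof.
move=> s /andP[s1 /forallP F]; apply/andP; split; first exact: subset_trans s s1.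
apply/forallP => N; apply/implyP => mn; have := F N; rewrite mn /=.
by apply: contra => h; apply: subset_trans h s.
Qed.
End Wed.

Section Free.
Variables (n : nat) (T : finType) (F : T -> 'rV['F_2]_n).

Lemma free_sum_nz (sig : {set T}) :
  row_free (\matrix_(k < #|sig|) F (enum_val k)) -> \sum_(x in sig) F x = 0 -> sig = set0.
Proof.
move=> fr s0; apply/eqP; apply: contraT => ne.
have cp : (0 < #|sig|)%N by rewrite card_gt0.
pose y : 'rV['F_2]_#|sig| := const_mx 1.
have : y *m (\matrix_(k < #|sig|) F (enum_val k)) = 0.
  rewrite mulmx_sum_row; transitivity (\sum_(x in sig) F x); last exact: s0.
  rewrite (big_enum_val (A := mem sig)) /=.
  by apply: eq_bigr => k _; rewrite rowK mxE scale1r.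
move/eqP; rewrite (mulmx_free_eq0 _ fr) => /eqP /matrixP /(_ 0 (Ordinal cp)).
by rewrite !mxE => /eqP; rewrite oner_eq0.
Qed.

Lemma sums_free (sig : {set T}) :
  (forall X : {set T}, X \subset sig -> \sum_(x in X) F x = 0 -> X = set0) ->
  row_free (\matrix_(k < #|sig|) F (enum_val k)).
Proof.
move=> H; rewrite -kermx_eq0; apply/eqP/row_matrixP => r; rewrite row0.
set A := \matrix_(k < #|sig|) F (enum_val k).
set y := row r (kermx A).
have yA : y *m A = 0 by apply/sub_kermxP; exact: row_sub.
pose K := [set k | y 0 k == 1].
pose X := [set enum_val k | k in K].
have XS : X \subset sig.
  by apply/subsetP => x /imsetP[k _ ->]; exact: enum_valP.
have : \sum_(x in X) F x = 0.
  rewrite big_imset /=; last by move=> i j _ _; apply: enum_val_inj.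
  transitivity (y *m A); last exact: yA.
  rewrite mulmx_sum_row big_mkcond /=; apply: eq_bigr => k _; rewrite rowK inE.
  by case: (F2_cases (y 0 k)) => ->; rewrite ?eqxx ?scale1r // eq_sym oner_eq0 scale0r.
move/(H _ XS) => X0; apply/rowP => k; rewrite [in RHS]mxE.
case: (F2_cases (y 0 k)) => yk; first exact: yk.
have : enum_val k \in X by apply: imset_f; rewrite inE yk.
by rewrite X0 inE.
Qed.
End Free.

Definition adj m (u v : 'I_m) := (ordS u == v) || (ordS v == u).

Lemma adjC m (u v : 'I_m) : adj u v = adj v u.
Proof. by rewrite /adj orbC. Qed.

Lemma adj_ordS m (u : 'I_m) : adj u (ordS u).
Proof. by rewrite /adj eqxx. Qed.

Lemma adj_pred m (u : 'I_m) : adj u (ord_pred u).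
Proof. by rewrite /adj ord_predK eqxx orbT. Qed.

Lemma black_adj m (S : {set 'I_m}) u v : ~~ odd #|S| -> adj u v -> u \notin S -> v \notin S ->
  black S u = black S v.
Proof.
move=> ev /orP[]/eqP <- uS vS; rewrite black_ordS //.
  by rewrite (negbTE uS).
by rewrite (negbTE vS).
Qed.

Lemma Om_adj m (S : {set 'I_m}) r u v : ~~ odd #|S| -> adj u v -> v \notin S ->
  v \in Omega r S -> u \in Omega r S.
Proof.
move=> ev a vS; rewrite !inE (negbTE vS) /=; case: (boolP (u \in S)) => //= uS.
by rewrite (black_adj ev a uS vS).
Qed.

Lemma S_nbr m (S : {set 'I_m}) r x : ~~ odd #|S| -> x \in S -> ord_pred x \notin S ->
  ordS x \notin S -> exists u, [/\ adj x u, u \notin S & u \in Omega r S].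
Proof.
move=> ev xS h1 h2.
have e1 : black S (ordS x) = ~~ black S x by rewrite black_ordS // xS.
have e2 : black S x = black S (ord_pred x).
  by rewrite -{1}(ord_predK x) black_ordS // (negbTE h1).
case: (boolP (black S (ordS x) == black S r)) => h.
  exists (ord_pred x); split => //; first exact: adj_pred.
  by rewrite !inE (negbTE h1) /= -e2 -(eqP h) e1; case: (black S x).
exists (ordS x); split => //; first exact: adj_ordS.
by rewrite !inE (negbTE h2).
Qed.

Section Basic.
Variables (m : nat) (lam : 'I_m -> 'rV['F_2]_2) (p q : 'I_m) (S T : {set 'I_m}).
Hypothesis hm : (3 <= m)%N.
Hypothesis hlam : is_char_Pm lam.
Hypothesis hS : eset lam p S.
Hypothesis hT : eset lam q T.
Hypothesis hpq : lam p != lam q.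

Lemma lam_nz v : lam v != 0.
Proof. by case: (hlam v). Qed.

Lemma pq_neq : p != q.
Proof. by apply: contra hpq => /eqP ->. Qed.

Lemma S_col x : x \in S -> lam x = lam p.
Proof. by case: hS => /subsetP h _ /h; rewrite inE => /eqP. Qed.

Lemma T_col x : x \in T -> lam x = lam q.
Proof. by case: hT => /subsetP h _ /h; rewrite inE => /eqP. Qed.

Lemma evS : ~~ odd #|S|. Proof. by case: hS. Qed.
Lemma evT : ~~ odd #|T|. Proof. by case: hT. Qed.

Lemma qS : q \notin S.
Proof. by apply/negP => /S_col h; move: hpq; rewrite h eqxx. Qed.

Lemma pT : p \notin T.
Proof. by apply/negP => /T_col h; move: hpq; rewrite h eqxx. Qed.

Lemma adj_col u v : adj u v -> lam u != lam v.
Proof.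
case/orP=> /eqP <-; first by case: (hlam u).
by rewrite eq_sym; case: (hlam v).
Qed.

Lemma col3 v : lam v != lam p -> lam v != lam q -> lam v = lam p + lam q.
Proof. by move=> h1 h2; apply: third_col => //; apply: lam_nz. Qed.

Lemma qOm : q \notin Omega q S.
Proof. by rewrite !inE (negbTE qS) eqxx. Qed.

Lemma pOm : p \notin Omega p T.
Proof. by rewrite !inE (negbTE pT) eqxx. Qed.

Lemma notS_of_col v : lam v != lam p -> v \notin S.
Proof. by apply: contra => /S_col ->. Qed.

Lemma notT_of_col v : lam v != lam q -> v \notin T.
Proof. by apply: contra => /T_col ->. Qed.

Lemma invS_same v : lam v = lam p -> invS lam p S v = lam v.
Proof. by move=> h; rewrite /invS h eqxx andbF. Qed.

Lemma invS_other v : lam v != lam p ->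
  invS lam p S v = if black S v then lam v + lam p else lam v.
Proof. by move=> h; rewrite /invS (notS_of_col h) h andbT. Qed.

Lemma invT_same v : lam v = lam q -> invS lam q T v = lam v.
Proof. by move=> h; rewrite /invS h eqxx andbF. Qed.

Lemma invT_other v : lam v != lam q ->
  invS lam q T v = if black T v then lam v + lam q else lam v.
Proof. by move=> h; rewrite /invS (notT_of_col h) h andbT. Qed.

Lemma ab_nz : lam p + lam q != 0.
Proof. by apply: contra hpq; rewrite addr_eq0 oppr_F2. Qed.

Lemma ab_a : lam p + lam q != lam p.
Proof. by rewrite -subr_eq0 addrAC subrr add0r lam_nz. Qed.

Lemma ab_b : lam p + lam q != lam q.
Proof. by rewrite -subr_eq0 addrK lam_nz. Qed.

End Basic.

Lemma sum_set3 (T : finType) (V : nmodType) (F : T -> V) a b c :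
  a != b -> a != c -> b != c -> \sum_(x in [set a; b; c]) F x = F a + F b + F c.
Proof.
move=> ab ac bc.
rewrite setUC big_setU1 /=; last by rewrite !inE negb_or !(eq_sym c) ac bc.
rewrite big_setU1 /=; last by rewrite !inE ab.
by rewrite big_set1 addrC.
Qed.

Lemma sum_set4 (T : finType) (V : nmodType) (F : T -> V) a b c d :
  a != b -> a != c -> a != d -> b != c -> b != d -> c != d ->
  \sum_(x in [set a; b; c; d]) F x = F a + F b + F c + F d.
Proof.
move=> ab ac ad bc bd cd.
rewrite setUC big_setU1 /=; last by rewrite !inE !negb_or !(eq_sym d) ad bd cd.
by rewrite sum_set3 // addrC.
Qed.

Section WedFaces.
Variables (m : nat) (p q : 'I_m).
Hypothesis pq : p != q.

Lemma face3 y : y != p -> y != q -> wed_face p q [set (y, false); (p, false); (q, false)].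
Proof.
move=> yp yq; rewrite wed_faceP; apply/andP; split.
  by apply/subsetP => x; rewrite !inE => /orP[/orP[]|]/eqP->; rewrite eqxx.
apply/orP; left; rewrite -(cards1 y); apply: subset_leq_card; apply/subsetP => v.
rewrite !inE /= !xpair_eqE /= !andbT !andbF !orbF.
case/andP=> /orP[/orP[]|] /eqP -> //.
  by rewrite eqxx.
by rewrite eqxx andbF.
Qed.

Lemma face4 x u : adj x u -> x != p -> x != q -> u != p -> u != q ->
  wed_face p q [set (x, false); (u, false); (p, false); (q, false)].
Proof.
move=> a xp xq up uq; rewrite wed_faceP; apply/andP; split.
  by apply/subsetP => z; rewrite !inE => /orP[/orP[/orP[]|]|]/eqP->; rewrite eqxx.
apply: (@face_sub _ _ [set x; u]).
  apply/subsetP => v; rewrite !inE /= !xpair_eqE /= !andbT !andbF !orbF.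
  case/andP=> /orP[/orP[/orP[]|]|] /eqP -> //; rewrite ?eqxx ?orbT //.
  by rewrite andbF.
apply/orP; right; case/orP: a => /eqP e; apply/existsP.
  by exists x; rewrite e.
by exists u; rewrite e setUC.
Qed.
End WedFaces.

Section Fwd.
Variables (m : nat) (lam : 'I_m -> 'rV['F_2]_2) (p q : 'I_m) (S T : {set 'I_m}).
Hypothesis hm : (3 <= m)%N.
Hypothesis hlam : is_char_Pm lam.
Hypothesis hS : eset lam p S.
Hypothesis hT : eset lam q T.
Hypothesis hpq : lam p != lam q.
Variable Lam : 'I_m * bool -> 'rV['F_2]_4.
Hypothesis H22 : proj_equiv p q Lam true true lam.
Hypothesis H12 : proj_equiv p q Lam false true (invS lam p S).
Hypothesis H21 : proj_equiv p q Lam true false (invS lam q T).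

Local Notation P1 := (Lam (p, false)).
Local Notation P2 := (Lam (p, true)).
Local Notation Q1 := (Lam (q, false)).
Local Notation Q2 := (Lam (q, true)).

Lemma link_other (i j : bool) v : v != p -> v != q -> link_id p q i j v = (v, false).
Proof. by move=> /negbTE vp /negbTE vq; rewrite /link_id vp vq. Qed.

Lemma link_p (i j : bool) : link_id p q i j p = (p, ~~ i).
Proof. by rewrite /link_id eqxx. Qed.

Lemma link_q (i j : bool) : link_id p q i j q = (q, ~~ j).
Proof. by rewrite /link_id eqxx eq_sym (negbTE (pq_neq hpq)). Qed.

Lemma alpha_form x : lam x = lam p -> x != p -> x \in Omega p T ->
  Lam (x, false) = P1 + P2 + Q2.
Proof.
move=> xa xp xO.
have xq : x != q by apply: contra hpq => /eqP <-; rewrite xa.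
have [M [z1 z2 k e]] := H22.
have [M' [z1' z2' k' e']] := H21.
have [M'' [z1'' z2'' k'' e'']] := H12.
have ex := e x; have ep := e p; rewrite link_other // in ex; rewrite link_p /= in ep.
have : (Lam (x, false) - P1) *m M = 0 by rewrite mulmxBl -ex -ep; apply/eqP; rewrite subr_eq0; apply/eqP; exact: xa.
move/k => [a [b Eab]].
have xT : x \notin T by apply: (notT_of_col hT); rewrite xa.
have hb : b = 1.
  case: (F2_cases b) => // b0; exfalso.
  have ex' := e' x; have ep' := e' p; rewrite link_other // in ex'; rewrite link_p /= in ep'.
  have : (Lam (x, false) - P1) *m M' = 0.
    by rewrite Eab b0 scale0r addr0 -scalemxAl z1' scaler0.
  move/eqP; rewrite mulmxBl -ex' -ep' subr_eq0.
  have xq' : lam x != lam q by rewrite xa.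
  rewrite (invT_other hT xq') (invT_other hT hpq) xa.
  move: xO; rewrite !inE (negbTE xT) /= => /negbTE.
  case: (black T x); case: (black T p) => // _ /eqP.
    by move/eqP; rewrite (negbTE (ab_a p q hlam)).
  by move/esym/eqP; rewrite (negbTE (ab_a p q hlam)).
have ha : a = 1.
  case: (F2_cases a) => // a0; exfalso.
  have ex'' := e'' x; have ep'' := e'' p; rewrite link_other // in ex''; rewrite link_p /= in ep''.
  have : (Lam (x, false) - P2) *m M'' = 0.
    by rewrite mulmxBl -ex'' -ep'' (invS_same _ xa) (invS_same _ (erefl (lam p))) xa subrr.
  have -> : Lam (x, false) - P2 = P1 + Q2 - P2.
    by rewrite -[Lam (x, false)](subrK P1) Eab a0 hb scale0r add0r scale1r (addrC Q2).
  rewrite !mulmxBl mulmxDl z1'' z2'' add0r sub0r -ep'' invS_same //.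
  by move/eqP; rewrite oppr_eq0 (negbTE (lam_nz hlam p)).
by rewrite -[Lam (x, false)](subrK P1) Eab ha hb !scale1r addrC addrA.
Qed.

Lemma beta_form u : lam u = lam q -> u != q -> u \in Omega q S ->
  Lam (u, false) = Q1 + Q2 + P2.
Proof.
move=> ub uq uO.
have up : u != p by apply: contra hpq => /eqP <-; rewrite ub.
have [M [z1 z2 k e]] := H22.
have [M' [z1' z2' k' e']] := H21.
have [M'' [z1'' z2'' k'' e'']] := H12.
have ex := e u; have eq := e q; rewrite link_other // in ex; rewrite link_q /= in eq.
have : (Lam (u, false) - Q1) *m M = 0 by rewrite mulmxBl -ex -eq ub subrr.
move/k => [a [b Eab]].
have uS : u \notin S by apply: (notS_of_col hS); rewrite ub eq_sym.
have ha : a = 1.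
  case: (F2_cases a) => // a0; exfalso.
  have ex'' := e'' u; have eq'' := e'' q; rewrite link_other // in ex''; rewrite link_q /= in eq''.
  have : (Lam (u, false) - Q1) *m M'' = 0.
    by rewrite Eab a0 scale0r add0r -scalemxAl z2'' scaler0.
  move/eqP; rewrite mulmxBl -ex'' -eq'' subr_eq0.
  have up' : lam u != lam p by rewrite ub eq_sym.
  have qp' : lam q != lam p by rewrite eq_sym.
  rewrite (invS_other hS up') (invS_other hS qp') ub.
  move: uO; rewrite !inE (negbTE uS) /= => /negbTE.
  case: (black S u); case: (black S q) => // _ /eqP.
    by move/eqP; rewrite (negbTE (ab_a q p hlam)).
  by move/esym/eqP; rewrite (negbTE (ab_a q p hlam)).
have hb : b = 1.
  case: (F2_cases b) => // b0; exfalso.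
  have ex' := e' u; have eq' := e' q; rewrite link_other // in ex'; rewrite link_q /= in eq'.
  have : (Lam (u, false) - Q2) *m M' = 0.
    by rewrite mulmxBl -ex' -eq' (invT_same _ ub) (invT_same _ (erefl (lam q))) ub subrr.
  have -> : Lam (u, false) - Q2 = Q1 + P2 - Q2.
    by rewrite -[Lam (u, false)](subrK Q1) Eab b0 ha scale0r addr0 scale1r (addrC P2).
  rewrite !mulmxBl mulmxDl z1' z2' add0r sub0r -eq' invT_same //.
  by move/eqP; rewrite oppr_eq0 (negbTE (lam_nz hlam q)).
by rewrite -[Lam (u, false)](subrK Q1) Eab ha hb !scale1r -addrA [RHS]addrC (addrC Q2).
Qed.

Lemma R_form y : lam y != lam p -> lam y != lam q -> y \in Omega q S -> y \in Omega p T ->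
  Lam (y, false) = P1 + Q1.
Proof.
move=> ya yb yS yT.
have yp : y != p by apply: contra ya => /eqP ->.
have yq : y != q by apply: contra yb => /eqP ->.
have yc := col3 hlam hpq ya yb.
have [M [z1 z2 k e]] := H22.
have [M' [z1' z2' k' e']] := H21.
have [M'' [z1'' z2'' k'' e'']] := H12.
have ey := e y; have ep := e p; have eq := e q.
rewrite link_other // in ey; rewrite link_p /= in ep; rewrite link_q /= in eq.
have : (Lam (y, false) - (P1 + Q1)) *m M = 0.
  by rewrite mulmxBl mulmxDl -ey -ep -eq yc subrr.
move/k => [a [b Eab]].
have yS' : y \notin S by apply: (notS_of_col hS).
have yT' : y \notin T by apply: (notT_of_col hT).
have ha : a = 0.
  case: (F2_cases a) => // a1; exfalso.
  have ey'' := e'' y; have eq'' := e'' q; have ep'' := e'' p.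
  rewrite link_other // in ey''; rewrite link_q /= in eq''; rewrite link_p /= in ep''.
  have : (Lam (y, false) - Q1) *m M'' = 0.
    apply/eqP; rewrite mulmxBl -ey'' -eq'' subr_eq0.
    have qp' : lam q != lam p by rewrite eq_sym.
    rewrite (invS_other hS ya) (invS_other hS qp') yc.
    move: yS; rewrite !inE (negbTE yS') /= => /negbTE.
    case: (black S y); case: (black S q) => // _.
      by rewrite addrAC addxx2 add0r.
    by rewrite addrC.
  have -> : Lam (y, false) - Q1 = P1 + (P2 + b *: Q2).
    by rewrite -[Lam (y, false)](subrK (P1 + Q1)) Eab a1 scale1r addrA addrK addrC.
  rewrite mulmxDl mulmxDl z1'' -scalemxAl z2'' scaler0 addr0 add0r -ep'' invS_same //.
  by move/eqP; rewrite (negbTE (lam_nz hlam p)).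
have hb : b = 0.
  case: (F2_cases b) => // b1; exfalso.
  have ey' := e' y; have eq' := e' q; have ep' := e' p.
  rewrite link_other // in ey'; rewrite link_q /= in eq'; rewrite link_p /= in ep'.
  have : (Lam (y, false) - P1) *m M' = 0.
    apply/eqP; rewrite mulmxBl -ey' -ep' subr_eq0.
    rewrite (invT_other hT yb) (invT_other hT hpq) yc.
    move: yT; rewrite !inE (negbTE yT') /= => /negbTE.
    case: (black T y); case: (black T p) => // _.
      by rewrite -addrA addxx2 addr0.
  have -> : Lam (y, false) - P1 = Q1 + Q2.
    by rewrite -[Lam (y, false)](subrK (P1 + Q1)) Eab ha b1 scale0r scale1r add0r (addrC P1) addrA addrK addrC.
  rewrite mulmxDl z2' add0r -eq' invT_same //.
  by move/eqP; rewrite (negbTE (lam_nz hlam q)).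
by rewrite -[Lam (y, false)](subrK (P1 + Q1)) Eab ha hb !scale0r addr0 add0r.
Qed.

Hypothesis Hc : is_char_wed p q Lam.

Lemma conflictR y : lam y != lam p -> lam y != lam q -> y \in Omega q S -> y \in Omega p T -> False.
Proof.
move=> ya yb yS yT.
have yp : y != p by apply: contra ya => /eqP ->.
have yq : y != q by apply: contra yb => /eqP ->.
have F := Hc (face3 yp yq).
have := free_sum_nz F; rewrite sum_set3 ?xpair_eqE /= ?andbT ?yp ?yq ?(pq_neq hpq) //.
rewrite (R_form ya yb yS yT) (addrAC _ Q1) addxx2 add0r addxx2.
move=> /(_ erefl) /setP /(_ (p, false)).
by rewrite !inE eqxx orbT.
Qed.

Lemma conflict2 x u : lam x = lam p -> x != p -> x \in Omega p T ->
  lam u = lam q -> u != q -> u \in Omega q S -> adj x u -> False.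
Proof.
move=> xa xp xO ub uq uO a.
have xq : x != q by apply: contra hpq => /eqP <-; rewrite xa.
have up : u != p by apply: contra hpq => /eqP <-; rewrite ub.
have xu : x != u by apply: contra hpq => /eqP e; rewrite -xa -ub e.
have F := Hc (face4 a xp xq up uq).
have := free_sum_nz F; rewrite sum_set4 ?xpair_eqE /= ?andbT ?xp ?xq ?up ?uq ?xu ?(pq_neq hpq) //.
rewrite (alpha_form xa xp xO) (beta_form ub uq uO).
have -> : P1 + P2 + Q2 + (Q1 + Q2 + P2) + P1 + Q1 = 0.
  rewrite -!addrA addrC -!addrA [X in _ + X]addrC -!addrA.
  by apply/eqP; rewrite -subr_eq0 subr_F2 ?add0r; apply/eqP; apply/rowP => i; rewrite !mxE;
    move: (Lam (p,false) 0 i) (Lam (p,true) 0 i) (Lam (q,false) 0 i) (Lam (q,true) 0 i) => a1 a2 a3 a4;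
    case: (F2_cases a1) => ->; case: (F2_cases a2) => ->; case: (F2_cases a3) => ->; case: (F2_cases a4) => ->;
    apply: val_inj.
move=> /(_ erefl) /setP /(_ (p, false)).
by rewrite !inE eqxx orbT.
Qed.

Lemma fwd : Omega q S :&: Omega p T = set0.
Proof.
apply/setP => x; rewrite inE in_set0; apply/negP; case/andP=> xS xT.
have xp : x != p by apply/eqP => e; move: xT; rewrite e (negbTE (pOm hT hpq)).
have xq : x != q by apply/eqP => e; move: xS; rewrite e (negbTE (qOm hS hpq)).
case: (eqVneq (lam x) (lam p)) => xa.
  have xT' : x \notin T by apply: (notT_of_col hT); rewrite xa.
  have [u [a uS uO]] : exists u, [/\ adj x u, u \notin S & u \in Omega q S].
    case: (boolP (x \in S)) => xS'.
      apply: S_nbr => //; first exact: evS hS.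
        by apply: (notS_of_col hS); rewrite -xa eq_sym; apply: (adj_col hlam); rewrite adj_pred.
      by apply: (notS_of_col hS); rewrite -xa eq_sym; apply: (adj_col hlam); rewrite adj_ordS.
    exists (ordS x); split; first exact: adj_ordS.
      by apply: (notS_of_col hS); rewrite -xa eq_sym; apply: (adj_col hlam); rewrite adj_ordS.
    by apply: (Om_adj (evS hS) _ xS' xS); rewrite adjC adj_ordS.
  have ua : lam u != lam p by rewrite -xa eq_sym; apply: (adj_col hlam).
  have uq : u != q by apply/eqP => e; move: uO; rewrite e (negbTE (qOm hS hpq)).
  case: (eqVneq (lam u) (lam q)) => ub.
    exact: (conflict2 xa xp xT ub uq uO a).
  apply: (conflictR ua ub uO).
  apply: (Om_adj (evT hT) _ xT' xT); by rewrite adjC.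
case: (eqVneq (lam x) (lam q)) => xb; last exact: (conflictR xa xb xS xT).
have xS' : x \notin S by apply: (notS_of_col hS); rewrite xb eq_sym.
have [u [a uT uO]] : exists u, [/\ adj x u, u \notin T & u \in Omega p T].
  case: (boolP (x \in T)) => xT'.
    apply: S_nbr => //; first exact: evT hT.
      by apply: (notT_of_col hT); rewrite -xb eq_sym; apply: (adj_col hlam); rewrite adj_pred.
    by apply: (notT_of_col hT); rewrite -xb eq_sym; apply: (adj_col hlam); rewrite adj_ordS.
  exists (ordS x); split; first exact: adj_ordS.
    by apply: (notT_of_col hT); rewrite -xb eq_sym; apply: (adj_col hlam); rewrite adj_ordS.
  by apply: (Om_adj (evT hT) _ xT' xT); rewrite adjC adj_ordS.
have ub : lam u != lam q by rewrite -xb eq_sym; apply: (adj_col hlam).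
have up : u != p by apply/eqP => e; move: uO; rewrite e (negbTE (pOm hT hpq)).
case: (eqVneq (lam u) (lam p)) => ua.
  by apply: (conflict2 ua up uO xb xq xS); rewrite adjC.
apply: (conflictR ua ub _ uO).
by apply: (Om_adj (evS hS) _ xS' xS); rewrite adjC.
Qed.
End Fwd.

Lemma core (hi hj P1 P2 Q1 Q2 Ai Bi si ti Aj Bj sj tj pi pj qi qj : bool) :
  Ai || Bi -> Aj || Bj -> ~~ ((Ai == Aj) && (Bi == Bj)) -> ~~ (si && ti) -> ~~ (sj && tj) ->
  (Bj && sj ==> si) -> (Bi && si ==> sj) -> (Aj && tj ==> ti) -> (Ai && ti ==> tj) ->
  (pi ==> Ai && ~~ Bi && ~~ ti) -> (pj ==> Aj && ~~ Bj && ~~ tj) ->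
  (qi ==> ~~ Ai && Bi && ~~ si) -> (qj ==> ~~ Aj && Bj && ~~ sj) ->
  (hi ==> ~~ pi && ~~ qi) -> (hj ==> ~~ pj && ~~ qj) ->
  (P1 && P2 ==> pi || pj) -> (Q1 && Q2 ==> qi || qj) ->
  (hi && Ai) (+) (hj && Aj) (+) P1 = false ->
  (hi && (Ai (+) si && Bi)) (+) (hj && (Aj (+) sj && Bj)) (+) P2 = false ->
  (hi && Bi) (+) (hj && Bj) (+) Q1 = false ->
  (hi && (Bi (+) ti && Ai)) (+) (hj && (Bj (+) tj && Aj)) (+) Q2 = false ->
  [&& ~~ hi, ~~ hj, ~~ P1, ~~ P2, ~~ Q1 & ~~ Q2].
Proof.
case: hi; case: hj => /=;
case: Ai; case: Bi => //=; case: Aj; case: Bj => //=;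
case: si; case: ti => //=; case: sj; case: tj => //=;
case: pi; case: pj => //=; case: qi; case: qj => //=;
case: P1; case: P2; case: Q1; case: Q2 => //=.
Qed.

Definition vec4 (b1 b2 b3 b4 : bool) : 'rV['F_2]_4 :=
  \row_(k < 4) (nth false [:: b1; b2; b3; b4] k)%:R.

Lemma b2F_add (a b : bool) : (a%:R + b%:R : 'F_2) = (a (+) b)%:R.
Proof. by case: a; case: b => //=; rewrite ?add0r ?addr0 //; apply: val_inj. Qed.

Lemma b2F_eq0 (a : bool) : (a%:R : 'F_2) = 0 -> a = false.
Proof. by case: a => //= /eqP; rewrite oner_eq0. Qed.

Lemma vec4_add a1 a2 a3 a4 b1 b2 b3 b4 :
  vec4 a1 a2 a3 a4 + vec4 b1 b2 b3 b4 = vec4 (a1 (+) b1) (a2 (+) b2) (a3 (+) b3) (a4 (+) b4).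
Proof.
apply/rowP => k; rewrite !mxE b2F_add.
by case: k => [[|[|[|[|k]]]] Hk].
Qed.

Lemma vec4_0 : vec4 false false false false = 0.
Proof. by apply/rowP => k; rewrite !mxE; case: k => [[|[|[|[|k]]]] Hk]. Qed.

Lemma vec4_eq0 b1 b2 b3 b4 : vec4 b1 b2 b3 b4 = 0 ->
  [/\ b1 = false, b2 = false, b3 = false & b4 = false].
Proof.
move/rowP => h.
have h0 := h (Ordinal (isT : (0 < 4)%N)); have h1 := h (Ordinal (isT : (1 < 4)%N)).
have h2 := h (Ordinal (isT : (2 < 4)%N)); have h3 := h (Ordinal (isT : (3 < 4)%N)).
rewrite !mxE /= in h0 h1 h2 h3.
by split; apply: b2F_eq0.
Qed.

Definition cond (b : bool) (v : 'rV['F_2]_4) := if b then v else 0.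

Lemma cond_vec4 b a1 a2 a3 a4 : cond b (vec4 a1 a2 a3 a4) = vec4 (b && a1) (b && a2) (b && a3) (b && a4).
Proof. by case: b; rewrite /cond //= vec4_0. Qed.

Definition mk4 (r1 r2 r3 r4 : 'rV['F_2]_2) : 'M['F_2]_(4, 2) :=
  \matrix_(k < 4) nth 0 [:: r1; r2; r3; r4] k.

Lemma mul_mk4 (x : 'rV['F_2]_4) r1 r2 r3 r4 :
  x *m mk4 r1 r2 r3 r4 = x 0 (Ordinal (isT : (0 < 4)%N)) *: r1 + x 0 (Ordinal (isT : (1 < 4)%N)) *: r2
   + x 0 (Ordinal (isT : (2 < 4)%N)) *: r3 + x 0 (Ordinal (isT : (3 < 4)%N)) *: r4.
Proof.
rewrite mulmx_sum_row !big_ord_recl big_ord0 addr0 !rowK !addrA.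
have e0 : (ord0 : 'I_4) = Ordinal (isT : (0 < 4)%N) by apply: val_inj.
have e1 : (lift ord0 ord0 : 'I_4) = Ordinal (isT : (1 < 4)%N) by apply: val_inj.
have e2 : (lift ord0 (lift ord0 ord0) : 'I_4) = Ordinal (isT : (2 < 4)%N) by apply: val_inj.
have e3 : (lift ord0 (lift ord0 (lift ord0 ord0)) : 'I_4) = Ordinal (isT : (3 < 4)%N) by apply: val_inj.
by rewrite e3 e2 e1 e0.
Qed.

Lemma vec4_mul b1 b2 b3 b4 r1 r2 r3 r4 :
  vec4 b1 b2 b3 b4 *m mk4 r1 r2 r3 r4 = b1%:R *: r1 + b2%:R *: r2 + b3%:R *: r3 + b4%:R *: r4.
Proof. by rewrite mul_mk4 !mxE. Qed.

Lemma vec4_entries (x : 'rV['F_2]_4) :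
  x = x 0 (Ordinal (isT : (0 < 4)%N)) *: vec4 true false false false
    + x 0 (Ordinal (isT : (1 < 4)%N)) *: vec4 false true false false
    + x 0 (Ordinal (isT : (2 < 4)%N)) *: vec4 false false true false
    + x 0 (Ordinal (isT : (3 < 4)%N)) *: vec4 false false false true.
Proof.
apply/rowP => k; rewrite !mxE /=.
case: k => [[|[|[|[|k]]]] Hk] //=; rewrite ?mulr1n ?mulr0n ?mulr1 ?mulr0 ?addr0 ?add0r;
  by congr (x 0 _); apply: val_inj.
Qed.

Lemma indep2 (u v : 'rV['F_2]_2) (a b : 'F_2) : u != 0 -> v != 0 -> u != v ->
  a *: u + b *: v = 0 -> a = 0 /\ b = 0.
Proof.
move=> u0 v0 uv; case: (F2_cases a) => ->; case: (F2_cases b) => ->; rewrite ?scale0r ?scale1r ?addr0 ?add0r //.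
- by move/eqP; rewrite (negbTE v0).
- by move/eqP; rewrite (negbTE u0).
- by move/eqP; rewrite addr_eq0 oppr_F2 (negbTE uv).
Qed.

Ltac f2close a b := apply/rowP; let k := fresh "k" in intro k; rewrite !mxE;
  let x := fresh "x" in let y := fresh "y" in
  move: (a 0 k) (b 0 k) => x y;
  case: (F2_cases x) => ->; case: (F2_cases y) => ->; by apply: val_inj.

Section Bwd.
Variables (m : nat) (lam : 'I_m -> 'rV['F_2]_2) (p q : 'I_m) (S T : {set 'I_m}).
Hypothesis hm : (3 <= m)%N.
Hypothesis hlam : is_char_Pm lam.
Hypothesis hS : eset lam p S.
Hypothesis hT : eset lam q T.
Hypothesis hpq : lam p != lam q.

Definition Ab v := lam v != lam q.
Definition Bb v := lam v != lam p.
Definition sO v := v \in Omega q S.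
Definition tO v := v \in Omega p T.

Definition Lam0 (x : 'I_m * bool) : 'rV['F_2]_4 :=
  let v := x.1 in
  if v == p then (if x.2 then vec4 false true false false else vec4 true false false false)
  else if v == q then (if x.2 then vec4 false false false true else vec4 false false true false)
  else if x.2 then 0 else vec4 (Ab v) (Ab v (+) sO v && Bb v) (Bb v) (Bb v (+) tO v && Ab v).

Lemma pqn : p != q. Proof. exact: pq_neq hpq. Qed.

Lemma L_p1 : Lam0 (p, false) = vec4 true false false false. Proof. by rewrite /Lam0 /= eqxx. Qed.
Lemma L_p2 : Lam0 (p, true) = vec4 false true false false. Proof. by rewrite /Lam0 /= eqxx. Qed.
Lemma L_q1 : Lam0 (q, false) = vec4 false false true false.
Proof. by rewrite /Lam0 /= eq_sym (negbTE pqn) eqxx. Qed.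
Lemma L_q2 : Lam0 (q, true) = vec4 false false false true.
Proof. by rewrite /Lam0 /= eq_sym (negbTE pqn) eqxx. Qed.
Lemma L_v v : v != p -> v != q ->
  Lam0 (v, false) = vec4 (Ab v) (Ab v (+) sO v && Bb v) (Bb v) (Bb v (+) tO v && Ab v).
Proof. by move=> /negbTE vp /negbTE vq; rewrite /Lam0 /= vp vq. Qed.

Lemma colcase v : [\/ lam v = lam p /\ (Ab v /\ ~~ Bb v),
                      lam v = lam q /\ (~~ Ab v /\ Bb v) |
                      lam v = lam p + lam q /\ (Ab v /\ Bb v)].
Proof.
rewrite /Ab /Bb; case: (eqVneq (lam v) (lam p)) => va.
  by constructor 1; rewrite va.
case: (eqVneq (lam v) (lam q)) => vb.
  by constructor 2; rewrite vb.
by constructor 3; rewrite (col3 hlam hpq va vb).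
Qed.

Ltac simpl4 := rewrite ?mulr1n ?mulr0n ?scale0r ?scale1r ?scaler0 ?addr0 ?add0r.

Lemma P22 : proj_equiv p q Lam0 true true lam.
Proof.
exists (mk4 (lam p) 0 (lam q) 0); split.
- by rewrite L_p2 vec4_mul /=; simpl4.
- by rewrite L_q2 vec4_mul /=; simpl4.
- move=> x; rewrite mul_mk4 !scaler0 !addr0 => /indep2.
  case/(_ (lam_nz hlam p) (lam_nz hlam q) hpq) => h0 h2.
  exists (x 0 (Ordinal (isT : (1 < 4)%N))), (x 0 (Ordinal (isT : (3 < 4)%N))).
  by rewrite {1}[x]vec4_entries h0 h2 !scale0r add0r addr0 L_p2 L_q2.
- move=> v; rewrite /link_id; case: (eqVneq v p) => [->|vp] /=.
    by rewrite L_p1 vec4_mul /=; simpl4.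
  case: (eqVneq v q) => [->|vq] /=.
    by rewrite L_q1 vec4_mul /=; simpl4.
  rewrite L_v // vec4_mul !scaler0 !addr0.
  case: (colcase v) => [[-> [-> /negbTE ->]]|[-> [/negbTE -> ->]]|[-> [-> ->]]] /=; simpl4 => //.
Qed.

Lemma iota_props : let i := invS lam p S q in [/\ i != 0, lam p != i & i = if black S q then lam q + lam p else lam q].
Proof.
have qp : lam q != lam p by rewrite eq_sym.
rewrite /= (invS_other hS qp); split => //; case: (black S q).
- by rewrite addrC (ab_nz hpq).
- exact: lam_nz.
- by rewrite eq_sym addrC (ab_a p q hlam).
- exact: hpq.
Qed.

Lemma kappa_props : let k := invS lam q T p in [/\ k != 0, k != lam q & k = if black T p then lam p + lam q else lam p].
Proof.
rewrite /= (invT_other hT hpq); split => //; case: (black T p).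
- exact: (ab_nz hpq).
- exact: lam_nz.
- exact: (ab_b p q hlam).
- exact: hpq.
Qed.

Lemma P12 : proj_equiv p q Lam0 false true (invS lam p S).
Proof.
have [i0 ai iE] := iota_props.
exists (mk4 0 (lam p) (invS lam p S q) 0); split.
- by rewrite L_p1 vec4_mul /=; simpl4.
- by rewrite L_q2 vec4_mul /=; simpl4.
- move=> x; rewrite mul_mk4 !scaler0 addr0 add0r => /indep2.
  case/(_ (lam_nz hlam p) i0 ai) => h1 h2.
  exists (x 0 (Ordinal (isT : (0 < 4)%N))), (x 0 (Ordinal (isT : (3 < 4)%N))).
  by rewrite {1}[x]vec4_entries h1 h2 !scale0r !addr0 L_p1 L_q2.
- move=> v; rewrite /link_id; case: (eqVneq v p) => [->|vp] /=.
    by rewrite L_p2 vec4_mul /=; simpl4; rewrite invS_same.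
  case: (eqVneq v q) => [->|vq] /=.
    by rewrite L_q1 vec4_mul /=; simpl4.
  rewrite L_v // vec4_mul !scaler0 addr0 add0r.
  case: (colcase v) => [[va [-> /negbTE ->]]|[vb [/negbTE -> ->]]|[vc [-> ->]]] /=.
  + by rewrite andbF /=; simpl4; rewrite invS_same.
  + have vS : v \notin S by apply: (notS_of_col hS); rewrite vb eq_sym.
    have vb' : lam v != lam p by rewrite vb eq_sym.
    rewrite (invS_other hS vb') vb iE /sO !inE (negbTE vS) /= andbT.
    case: (black S v); case: (black S q) => /=; simpl4 => //; f2close (lam p) (lam q).
  + have va' : lam v != lam p by rewrite vc (ab_a p q hlam).
    have vS : v \notin S by apply: (notS_of_col hS).
    rewrite (invS_other hS va') vc iE /sO !inE (negbTE vS) /= andbT.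
    case: (black S v); case: (black S q) => /=; simpl4 => //; f2close (lam p) (lam q).
Qed.

Lemma P21 : proj_equiv p q Lam0 true false (invS lam q T).
Proof.
have [k0 kb kE] := kappa_props.
exists (mk4 (invS lam q T p) 0 0 (lam q)); split.
- by rewrite L_p2 vec4_mul /=; simpl4.
- by rewrite L_q1 vec4_mul /=; simpl4.
- move=> x; rewrite mul_mk4 !scaler0 !addr0 => /indep2.
  case/(_ k0 (lam_nz hlam q) kb) => h1 h2.
  exists (x 0 (Ordinal (isT : (1 < 4)%N))), (x 0 (Ordinal (isT : (2 < 4)%N))).
  by rewrite {1}[x]vec4_entries h1 h2 !scale0r addr0 add0r L_p2 L_q1.
- move=> v; rewrite /link_id; case: (eqVneq v p) => [->|vp] /=.
    by rewrite L_p1 vec4_mul /=; simpl4.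
  case: (eqVneq v q) => [->|vq] /=.
    by rewrite L_q2 vec4_mul /=; simpl4; rewrite invT_same.
  rewrite L_v // vec4_mul !scaler0 !addr0.
  case: (colcase v) => [[va [-> /negbTE ->]]|[vb [/negbTE -> ->]]|[vc [-> ->]]] /=.
  + have vT : v \notin T by apply: (notT_of_col hT); rewrite va.
    have va' : lam v != lam q by rewrite va.
    rewrite (invT_other hT va') va kE /tO !inE (negbTE vT) /= andbT.
    case: (black T v); case: (black T p) => /=; simpl4 => //; f2close (lam p) (lam q).
  + by rewrite andbF /=; simpl4; rewrite invT_same.
  + have vb' : lam v != lam q by rewrite vc (ab_b p q hlam).
    have vT : v \notin T by apply: (notT_of_col hT).
    rewrite (invT_other hT vb') vc kE /tO !inE (negbTE vT) /= andbT.
    case: (black T v); case: (black T p) => /=; simpl4 => //; f2close (lam p) (lam q).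
Qed.

Hypothesis hO : Omega q S :&: Omega p T = set0.

Lemma col_det u v : Ab u = Ab v -> Bb u = Bb v -> lam u = lam v.
Proof.
case: (colcase u) => [[eu [au bu]]|[eu [au bu]]|[eu [au bu]]];
case: (colcase v) => [[ev [av bv]]|[ev [av bv]]|[ev [av bv]]]; rewrite eu ev //.
all: try by move: au av bu bv; case: (Ab u); case: (Ab v); case: (Bb u); case: (Bb v).
Qed.

Lemma not_st v : ~~ (sO v && tO v).
Proof.
apply/negP => /andP[h1 h2]; have := in_set0 v; rewrite -hO in_setI.
by move: h1 h2; rewrite /sO /tO => -> ->.
Qed.

Definition hbit (X : {set 'I_m * bool}) v := (v != p) && (v != q) && ((v, false) \in X).

Lemma sum_decomp (X : {set 'I_m * bool}) (i j : 'I_m) :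
  X \subset wed_vert p q -> i != j -> base p q X \subset [set i; j] ->
  \sum_(x in X) Lam0 x =
    cond (hbit X i) (Lam0 (i, false)) + cond (hbit X j) (Lam0 (j, false))
    + (cond ((p, true) \in X) (Lam0 (p, true)) + cond ((p, false) \in X) (Lam0 (p, false)))
    + (cond ((q, true) \in X) (Lam0 (q, true)) + cond ((q, false) \in X) (Lam0 (q, false))).
Proof.
move=> sub ij sb.
rewrite big_mkcond /=.
rewrite (eq_bigr (fun x => cond ((x.1, x.2) \in X) (Lam0 (x.1, x.2)))); last by case.
rewrite -(pair_bigA _ (fun v b => cond ((v, b) \in X) (Lam0 (v, b)))) /=.
rewrite (bigD1 p) //= (bigD1 q) //= ?pqn; last by rewrite eq_sym pqn.
rewrite !big_bool /=.
have -> : \sum_(v | (v != p) && (v != q)) \sum_b cond ((v, b) \in X) (Lam0 (v, b))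
  = \sum_v cond (hbit X v) (Lam0 (v, false)).
  rewrite [RHS](bigID (fun v => (v != p) && (v != q))) /=.
  rewrite [X in _ = _ + X]big1; last first.
    by move=> v; rewrite /hbit => /negbTE ->.
  rewrite addr0; apply: eq_bigr => v /andP[vp vq]; rewrite big_bool /=.
  have -> : (v, true) \in X = false.
    apply/negbTE/negP => h.
    by have := subsetP sub _ h; rewrite !inE /= (negbTE vp) (negbTE vq).
  by rewrite /hbit vp vq /= /cond add0r.
rewrite (bigD1 i) //= (bigD1 j) ?(eq_sym j) //= big1 ?addr0; last first.
  move=> v /andP[vi vj]; rewrite /cond; case hv: (hbit X v) => //.
  have : v \in base p q X.
    by move: hv; rewrite /hbit !inE => /andP[/andP[-> ->] ->].
  by move/(subsetP sb); rewrite !inE (negbTE vi) (negbTE vj).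
set a := cond (hbit X i) _ + _.
set b := cond ((p, true) \in X) _ + _.
set c := cond ((q, true) \in X) _ + _.
by rewrite [c + a]addrC addrA [b + a]addrC.
Qed.

Lemma AB_or v : Ab v || Bb v.
Proof. by rewrite /Ab /Bb; case: (eqVneq (lam v) (lam q)) => // ->; rewrite eq_sym hpq. Qed.

Lemma fp v : (p == v) ==> Ab v && ~~ Bb v && ~~ tO v.
Proof. by apply/implyP => /eqP <-; rewrite /Ab /Bb /tO hpq eqxx (negbTE (pOm hT hpq)). Qed.

Lemma fq v : (q == v) ==> ~~ Ab v && Bb v && ~~ sO v.
Proof. by apply/implyP => /eqP <-; rewrite /Ab /Bb /sO eqxx eq_sym hpq (negbTE (qOm hS hpq)). Qed.

Lemma condL (X : {set 'I_m * bool}) v : cond (hbit X v) (Lam0 (v, false)) =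
  cond (hbit X v) (vec4 (Ab v) (Ab v (+) sO v && Bb v) (Bb v) (Bb v (+) tO v && Ab v)).
Proof.
rewrite /cond; case h: (hbit X v) => //.
by move: h; rewrite /hbit => /andP[/andP[vp vq] _]; rewrite L_v.
Qed.

Lemma sum_zero_empty (X : {set 'I_m * bool}) :
  wed_face p q X -> \sum_(x in X) Lam0 x = 0 -> X = set0.
Proof.
rewrite wed_faceP => /andP[sub Fb] s0.
have [i si] := face_edge p Fb.
have aij : adj i (ordS i) := adj_ordS i.
have ij : i != ordS i.
  rewrite -val_eqE val_ordS; case: ifP => h; apply/negP => /eqP /= h'; have := ltn_ord i; lia.
move: s0; rewrite (sum_decomp sub ij si) !condL L_p1 L_p2 L_q1 L_q2 !cond_vec4 !vec4_add.
case/vec4_eq0; rewrite ?andbT ?andbF ?addbF ?addFb => c1 c2 c3 c4.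
set j := ordS i in aij ij si c1 c2 c3 c4.
have f3 : ~~ ((Ab i == Ab j) && (Bb i == Bb j)).
  apply/negP => /andP[/eqP e1 /eqP e2]; have := adj_col hlam aij.
  by rewrite (col_det e1 e2) eqxx.
have f6 : Bb j && sO j ==> sO i.
  apply/implyP => /andP[bj sj]; exact: (Om_adj (evS hS) aij (notS_of_col hS bj) sj).
have f7 : Bb i && sO i ==> sO j.
  apply/implyP => /andP[bi si']; apply: (Om_adj (evS hS) _ (notS_of_col hS bi) si').
  by rewrite adjC.
have f8 : Ab j && tO j ==> tO i.
  apply/implyP => /andP[bj sj]; exact: (Om_adj (evT hT) aij (notT_of_col hT bj) sj).
have f9 : Ab i && tO i ==> tO j.
  apply/implyP => /andP[bi si']; apply: (Om_adj (evT hT) _ (notT_of_col hT bi) si').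
  by rewrite adjC.
have f14 : hbit X i ==> ~~ (p == i) && ~~ (q == i).
  by rewrite /hbit !(eq_sym _ i); apply/implyP => /andP[/andP[-> ->] _].
have f15 : hbit X j ==> ~~ (p == j) && ~~ (q == j).
  by rewrite /hbit !(eq_sym _ j); apply/implyP => /andP[/andP[-> ->] _].
have f16 : ((p, false) \in X) && ((p, true) \in X) ==> (p == i) || (p == j).
  apply/implyP => /andP[h1 h2].
  have : p \in base p q X by rewrite !inE h1 h2 orbT.
  by move/(subsetP si); rewrite !inE.
have f17 : ((q, false) \in X) && ((q, true) \in X) ==> (q == i) || (q == j).
  apply/implyP => /andP[h1 h2].
  have : q \in base p q X by rewrite !inE h1 h2 orbT.
  by move/(subsetP si); rewrite !inE.
have := @core _ _ _ _ _ _ _ _ _ _ _ _ _ _ _ _ _ _ (AB_or i) (AB_or j) f3 (not_st i) (not_st j) f6 f7 f8 f9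
  (fp i) (fp j) (fq i) (fq j) f14 f15 f16 f17 c1 c2 c3 c4.
case/andP => /negbTE hi /andP[/negbTE hj /andP[/negbTE P1 /andP[/negbTE P2 /andP[/negbTE Q1 /negbTE Q2]]]].
apply/setP => -[v b]; rewrite in_set0; apply/negbTE/negP => vX.
case: (eqVneq v p) => [e|vp]; first by move: vX; rewrite e; case: b; rewrite ?P1 ?P2.
case: (eqVneq v q) => [e|vq]; first by move: vX; rewrite e; case: b; rewrite ?Q1 ?Q2.
case: b vX => vX.
  by have := subsetP sub _ vX; rewrite !inE /= (negbTE vp) (negbTE vq).
have : v \in base p q X by rewrite !inE vX vp vq.
move/(subsetP si); rewrite !inE => /orP[]/eqP e.
  by move: hi; rewrite /hbit -e vp vq vX.
by move: hj; rewrite /hbit -e vp vq vX.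
Qed.

Lemma char_Lam0 : is_char_wed p q Lam0.
Proof.
move=> sig F; apply: sums_free => Y sub s0.
exact: sum_zero_empty (wed_face_sub sub F) s0.
Qed.
End Bwd.


Unset Implicit Arguments.

Theorem proposition3 (m : nat) (hm : (3 <= m)%N)
  (lam : 'I_m -> 'rV['F_2]_2) (hlam : is_char_Pm lam)
  (p q : 'I_m) (S T : {set 'I_m})
  (hS : eset lam p S) (hT : eset lam q T)
  (hS0 : S != set0) (hT0 : T != set0) (hpq : lam p != lam q) :
  (exists Lam : 'I_m * bool -> 'rV['F_2]_4,
      [/\ is_char_wed p q Lam,
          proj_equiv p q Lam true true lam,
          proj_equiv p q Lam false true (invS lam p S)
        & proj_equiv p q Lam true false (invS lam q T)])
  <-> Omega q S :&: Omega p T = set0.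
Proof.
split.
- case=> Lam [Hc H22 H12 H21].
  exact: (fwd hlam hS hT hpq H22 H12 H21 Hc).
- move=> hO; exists (Lam0 lam p q S T); split.
  + exact: (char_Lam0 hm hlam hS hT hpq hO).
  + exact: (P22 S T hlam hpq).
  + exact: (P12 T hlam hS hpq).
  + exact: (P21 S hlam hT hpq).
Qed.
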